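(* For any $\alpha\in(0,\frac\pi2)$ there exist constants $C_\alpha>0$ and $a_0=a_0(\alpha)>0$ such that for $u\in\mathbb{C}$ and $g=e^{i\gamma}\in\mathbb{S}^1\subset\mathbb{C}$ with $W(u,g)<a_0^2$ we may represent $u=fe^{i\psi}$ with $f\ge0$, $\psi\in\mathbb{R}$, such that $|f^2-1|\le\sqrt{2W(u,g)}<\sqrt2a_0$, and either $|\psi-\gamma-\alpha|<C_\alpha\sqrt{W(u,g)}$ or $|\psi-\gamma+\alpha|<C_\alpha\sqrt{W(u,g)}$.
   Context: $\mathbb{R}^2\simeq\mathbb{C}$ with $(u,v)=\Re[u\bar v]$; $W(u,g)=\frac12(|u|^2-1)^2+[(u,g)-\cos\alpha]^2$. *)

(* Defs.v *)
(* concrete reals R. The complex plane C ~ R^2 is modeled by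
   pairs of reals (x, y) <-> x + i y. *)
From Stdlib Require Import Reals.
Open Scope R_scope.

(* Euclidean inner product (u, v) = Re[u * conj v] on R^2 ~ C. *)
Definition inner (u v : R * R) : R := fst u * fst v + snd u * snd v.

Definition normsq (u : R * R) : R := fst u ^ 2 + snd u ^ 2.

Definition expi (t : R) : R * R := (cos t, sin t).

Definition W (alpha : R) (u g : R * R) : R :=
  / 2 * (normsq u - 1) ^ 2 + (inner u g - cos alpha) ^ 2.

(* Main.v *)
Require Import Defs.
From Stdlib Require Import Reals Lra.
Open Scope R_scope.
Lemma sin_ge_third x : 0 <= x <= PI/2 -> x/3 <= sin x.
Proof.
intros [H0 H1]. pose proof PI_4. pose proof PI_RGT_0.
destruct (SIN x H0 ltac:(lra)) as [Hl _].
unfold sin_lb, sin_approx, sin_term in Hl; simpl in Hl.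
eapply Rle_trans; [|exact Hl].
assert (Hs : 0 <= x*x <= 4) by nra.
assert (0 <= x * (2/3 - (x*x)/6 + (x*x)*(x*x)/120 - (x*x)*(x*x)*(x*x)/5040)).
{ apply Rmult_le_pos; auto. set (s := x*x) in *. nra. }
match goal with |- _ <= ?r => replace r with (x/3 + x * (2/3 - (x*x)/6 + (x*x)*(x*x)/120 - (x*x)*(x*x)*(x*x)/5040)) by field end.
lra.
Qed.
Lemma abs_sin_ge x : -(PI/2) <= x <= PI/2 -> Rabs x / 3 <= Rabs (sin x).
Proof.
intros Hx. destruct (Rle_dec 0 x).
- pose proof (sin_ge_third x ltac:(lra)). rewrite (Rabs_right x) by lra.
  rewrite Rabs_right by lra. lra.
- pose proof (sin_ge_third (-x) ltac:(lra)). rewrite sin_neg in H.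
  rewrite (Rabs_left x) by lra. rewrite Rabs_left1 by lra. lra.
Qed.

Lemma sin_mid_ge t a : 0 <= t <= PI -> 0 < a < PI/2 -> sin (a/2) <= sin ((t + a)/2).
Proof.
intros Ht Ha. destruct (Rle_dec ((t+a)/2) (PI/2)).
- apply sin_incr_1; lra.
- rewrite <- (sin_PI_x ((t+a)/2)). apply sin_incr_1; lra.
Qed.

Lemma cos_sep t a : 0 <= t <= PI -> 0 < a < PI/2 ->
  sin (a/2) / 3 * Rabs (t - a) <= Rabs (cos t - cos a).
Proof.
intros Ht Ha. rewrite form2.
pose proof (sin_mid_ge t a Ht Ha).
assert (0 < sin (a/2)) by (apply sin_gt_0; lra).
pose proof (abs_sin_ge ((t-a)/2) ltac:(lra)).
rewrite !Rabs_mult. rewrite (Rabs_right (sin ((t+a)/2))) by lra.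
replace (Rabs (-2)) with 2 by (rewrite Rabs_left by lra; lra).
replace (Rabs ((t-a)/2)) with (Rabs (t-a) / 2) in H1.
2:{ unfold Rdiv. rewrite Rabs_mult. rewrite (Rabs_right (/2)) by lra. auto. }
pose proof (Rabs_pos (t-a)).
assert (sin (a/2) * (Rabs (t-a)/2/3) <= sin ((t+a)/2) * Rabs (sin ((t-a)/2))).
{ apply Rmult_le_compat; try lra. }
lra.
Qed.

Lemma abs_le_sqrt z q : z^2 <= q -> Rabs z <= sqrt q.
Proof. intros H. rewrite <- sqrt_Rsqr_abs. apply sqrt_le_1_alt. unfold Rsqr; lra. Qed.

Theorem lemma5p1 :
  forall alpha : R, 0 < alpha < PI / 2 ->
  exists C a0 : R, 0 < C /\ 0 < a0 /\
    forall (u : R * R) (gamma : R),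
      W alpha u (expi gamma) < a0 ^ 2 ->
      exists f psi : R,
        0 <= f /\
        u = (f * cos psi, f * sin psi) /\
        Rabs (f ^ 2 - 1) <= sqrt (2 * W alpha u (expi gamma)) /\
        sqrt (2 * W alpha u (expi gamma)) < sqrt 2 * a0 /\
        (Rabs (psi - gamma - alpha) <= C * sqrt (W alpha u (expi gamma)) \/
         Rabs (psi - gamma + alpha) <= C * sqrt (W alpha u (expi gamma))).
Proof.
intros alpha Ha.
assert (Hs : 0 < sin (alpha/2)) by (apply sin_gt_0; pose proof PI_RGT_0; lra).
exists (9 / sin (alpha/2)), 1. split; [apply Rdiv_lt_0_compat; lra|]. split; [lra|].
intros [x y] gamma HW.
set (w := W alpha (x, y) (expi gamma)) in *.
set (c := cos gamma). set (s := sin gamma).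
assert (Hcs : s*s + c*c = 1) by (pose proof (sin2_cos2 gamma); unfold Rsqr in *; auto).
set (v1 := x*c + y*s). set (v2 := -x*s + y*c).
set (f := sqrt (x^2 + y^2)).
assert (Hf0 : 0 <= f) by apply sqrt_pos.
assert (Hff : f * f = x^2 + y^2) by (apply sqrt_sqrt; nra).
assert (Hfv : f * f = v1^2 + v2^2) by (rewrite Hff; unfold v1, v2; nra).
assert (Hw : w = /2 * (f^2 - 1)^2 + (v1 - cos alpha)^2).
{ replace (f^2) with (x^2+y^2) by (rewrite <- Hff; ring).
  unfold w, W, normsq, inner, expi, v1, c, s; simpl. ring. }
assert (Hw0 : 0 <= w) by (rewrite Hw; pose proof (pow2_ge_0 (f^2-1)); pose proof (pow2_ge_0 (v1 - cos alpha)); lra).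
assert (Hsw : 0 <= sqrt w) by apply sqrt_pos.
assert (H1 : Rabs (f^2 - 1) <= sqrt (2*w)) by (apply abs_le_sqrt; pose proof (pow2_ge_0 (v1 - cos alpha)); lra).
assert (H2 : Rabs (v1 - cos alpha) <= sqrt w) by (apply abs_le_sqrt; pose proof (pow2_ge_0 (f^2-1)); lra).
assert (Hs2 : sqrt (2*w) = sqrt 2 * sqrt w) by (apply sqrt_mult_alt; lra).
assert (Hsq2 : sqrt 2 * sqrt 2 = 2) by (apply sqrt_sqrt; lra).
assert (Hsq2p : 0 <= sqrt 2) by apply sqrt_pos.
assert (Hsq2le : sqrt 2 <= 2) by nra.
assert (Hw1 : sqrt w < 1) by (rewrite <- sqrt_1; apply sqrt_lt_1_alt; lra).
assert (Hlt : sqrt (2*w) < sqrt 2 * 1).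
{ rewrite Hs2. apply Rmult_lt_compat_l; [|lra]. apply sqrt_lt_R0; lra. }
destruct (Req_dec f 0) as [Hf|Hf].
- exists f, (gamma + alpha). repeat split; auto.
  + assert (x^2 + y^2 = 0) by nra. assert (x = 0) by nra. assert (y = 0) by nra.
    subst x y. rewrite Hf. f_equal; ring.
  + left. replace (gamma + alpha - gamma - alpha) with 0 by ring. rewrite Rabs_R0.
    apply Rmult_le_pos; auto. apply Rlt_le, Rdiv_lt_0_compat; lra.
- assert (Hfp : 0 < f) by lra.
  set (a := v1 / f).
  assert (Hva : v1 = f * a) by (unfold a; field; auto).
  assert (Ha1 : -1 <= a <= 1).
  { assert (a*a <= 1). { assert (f*f*(a*a) <= f*f*1) by nra.
      apply Rmult_le_reg_l with (f*f); nra. } nra. }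
  set (t := acos a).
  pose proof (acos_bound a) as Ht.
  assert (Hct : cos t = a) by (apply cos_acos; auto).
  assert (Hst : sin t = Rabs v2 / f).
  { unfold t. rewrite sin_acos by auto.
    replace (1 - a²) with ((v2/f)²).
    - rewrite sqrt_Rsqr_abs. unfold Rdiv. rewrite Rabs_mult, (Rabs_right (/f)); auto.
      apply Rle_ge, Rlt_le, Rinv_0_lt_compat; auto.
    - unfold Rsqr. apply Rmult_eq_reg_l with (f*f); [|nra].
      field_simplify; auto. rewrite Hva in Hfv. nra. }
  assert (Hf1 : Rabs (f - 1) <= Rabs (f^2 - 1)).
  { replace (f^2 - 1) with ((f-1)*(f+1)) by ring. rewrite Rabs_mult.
    rewrite (Rabs_right (f+1)) by lra. pose proof (Rabs_pos (f-1)). nra. }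
  assert (Hca : Rabs (cos t - cos alpha) <= 3 * sqrt w).
  { rewrite Hct.
    replace (a - cos alpha) with ((v1 - cos alpha) - a*(f-1)) by (rewrite Hva; ring).
    eapply Rle_trans; [apply Rabs_triang|]. rewrite Rabs_Ropp, Rabs_mult.
    assert (Rabs a <= 1) by (apply Rabs_le; lra).
    pose proof (Rabs_pos a). pose proof (Rabs_pos (f-1)).
    assert (Rabs a * Rabs (f-1) <= Rabs (f-1)) by nra. nra. }
  pose proof (cos_sep t alpha Ht Ha) as Hsep.
  assert (Hta : Rabs (t - alpha) <= 9 / sin (alpha/2) * sqrt w).
  { apply Rmult_le_reg_l with (sin (alpha/2) / 3).
    - apply Rdiv_lt_0_compat; lra.
    - replace (sin (alpha/2) / 3 * (9 / sin (alpha/2) * sqrt w)) with (3 * sqrt w)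
        by (field; lra). lra. }
  assert (Ex : x = c*v1 - s*v2) by (unfold v1, v2; transitivity (x*(s*s+c*c)); [rewrite Hcs; ring | ring]).
  assert (Ey : y = s*v1 + c*v2) by (unfold v1, v2; transitivity (y*(s*s+c*c)); [rewrite Hcs; ring | ring]).
  exists f.
  destruct (Rle_dec 0 v2) as [Hv2|Hv2].
  + exists (gamma + t). repeat split; auto.
    * rewrite Rabs_right in Hst by lra.
      f_equal.
      -- rewrite cos_plus. fold c s. rewrite Hct, Hst, Ex, Hva. field. lra.
      -- rewrite sin_plus. fold c s. rewrite Hct, Hst, Ey, Hva. field. lra.
    * left. replace (gamma + t - gamma - alpha) with (t - alpha) by ring. auto.
  + exists (gamma - t). repeat split; auto.
    * rewrite Rabs_left in Hst by lra.
      f_equal.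
      -- rewrite cos_minus. fold c s. rewrite Hct, Hst, Ex, Hva. field. lra.
      -- rewrite sin_minus. fold c s. rewrite Hct, Hst, Ey, Hva. field. lra.
    * right. replace (gamma - t - gamma + alpha) with (-(t - alpha)) by ring.
      rewrite Rabs_Ropp. auto.
Qed.
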